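(* Consider the inexact Bregman proximal point algorithm described in the context, with $\Phi$ Legendre, and define the ergodic iterates $\breve p^K=\big(\sum_{k=0}^K\sigma_kp^k\big)/\big(\sum_{k=0}^K\sigma_k\big)$. Let $z\in\operatorname{dom}T\cap\operatorname{dom}\Phi$. Then for every $w\in T(z)$ and every $K\ge0$, $$\langle w,\breve p^K-z\rangle\le\frac{D_\Phi(z,z^0)}{\sum_{k=0}^K\sigma_k}.$$
   Context: Let $\mathbb{E}$ be a finite-dimensional Euclidean space, $\Gamma_0(\mathbb{E})$ the proper lsc convex functions $\mathbb{E}\to\mathbb{R}\cup\{+\infty\}$. $\Phi\in\Gamma_0(\mathbb{E})$ is Legendre if it is essentially smooth ($\operatorname{int}\operatorname{dom}\Phi\ne\emptyset$, differentiable there, $\|\nabla\Phi(z^\nu)\|\to\infty$ whenever $\operatorname{int}\operatorname{dom}\Phi\ni z^\nu\to z\in\operatorname{bdry}\operatorname{dom}\Phi$) and essentially strictly convex (strictly convex on every convex subset of $\operatorname{dom}\partial\Phi$); then $\nabla\Phi:\operatorname{int}\operatorname{dom}\Phi\to\operatorname{int}\operatorname{dom}\Phi^*$ is a bijection with inverse $\nabla\Phi^*$. $D_\Phi(z_1,z_2)=\Phi(z_1)-\Phi(z_2)-\langle\nabla\Phi(z_2),z_1-z_2\rangle$ if $z_1\in\operatorname{dom}\Phi$, $z_2\in\operatorname{int}\operatorname{dom}\Phi$, and $+\infty$ otherwise. Let $T:\mathbb{E}\rightrightarrows\mathbb{E}$ be maximal monotone and assume $\operatorname{int}\operatorname{dom}\Phi\cap\operatorname{dom}T\ne\emptyset$.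 Inexact Bregman proximal point algorithm: given $z^0\in\operatorname{int}\operatorname{dom}\Phi$, step sizes $\sigma_k\ge\sigma>0$ and tolerances $\rho_k\in[0,1)$, it generates triples $(z^{k+1},p^k,w^k)$ with $p^k\in\operatorname{dom}\Phi$, $w^k\in T(p^k)$, $\nabla\Phi(z^k)-\sigma_kw^k\in\operatorname{int}\operatorname{dom}\Phi^*$, $z^{k+1}=\nabla\Phi^*(\nabla\Phi(z^k)-\sigma_kw^k)\in\operatorname{int}\operatorname{dom}\Phi$, and $D_\Phi(p^k,z^{k+1})\le\rho_kD_\Phi(p^k,z^k)$. *)

(* Defs.v *)
From HB Require Import structures.
From mathcomp Require Import all_boot all_order all_algebra.
From mathcomp Require Import all_classical all_reals all_analysis.
Set Implicit Arguments. Unset Strict Implicit. Unset Printing Implicit Defensive.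
Import Order.TTheory GRing.Theory Num.Theory.
Import numFieldNormedType.Exports.
Local Open Scope classical_set_scope.
Local Open Scope ring_scope.

Section Bregman.
Variables (R : realType) (n : nat).
Notation E := 'rV[R]_n.

Definition dot (u v : E) : R := \sum_(i < n) u ord0 i * v ord0 i.
Definition enorm (u : E) : R := Num.sqrt (dot u u).

Definition edom (f : E -> \bar R) : set E := [set x | (f x < +oo)%E].

Definition proper_fun (f : E -> \bar R) : Prop :=
  (exists x, (f x < +oo)%E) /\ (forall x, (-oo < f x)%E).
Definition lsc_fun (f : E -> \bar R) : Prop :=
  forall (x : E) (a : R), (a%:E < f x)%E -> \forall y \near x, (a%:E < f y)%E.
Definition convex_fun (f : E -> \bar R) : Prop :=
  forall (x y : E) (t : R), 0 < t < 1 ->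
    (f (t *: x + (1 - t) *: y)%R <= t%:E * f x + (1 - t)%:E * f y)%E.
Definition Gamma0 (f : E -> \bar R) : Prop :=
  proper_fun f /\ lsc_fun f /\ convex_fun f.

Definition grad (f : E -> \bar R) (x : E) : E :=
  \row_(i < n) ('d (fun y => fine (f y)) x (delta_mx ord0 i : E)).
Definition diff_at (f : E -> \bar R) (x : E) : Prop :=
  differentiable (fun y => fine (f y)) x.

Definition conj_fun (f : E -> \bar R) : E -> \bar R :=
  fun y => ereal_sup [set ((dot x y)%:E - f x)%E | x in [set: E]].

Definition subdiff (f : E -> \bar R) (x : E) : set E :=
  [set g | (f x < +oo)%E /\ forall y, (f x + (dot g (y - x)%R)%:E <= f y)%E].
Definition dom_subdiff (f : E -> \bar R) : set E := [set x | subdiff f x !=set0].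

Definition convex_set_E (C : set E) : Prop :=
  forall x y (t : R), C x -> C y -> 0 <= t <= 1 -> C (t *: x + (1 - t) *: y).
Definition strictly_convex_on (f : E -> \bar R) (C : set E) : Prop :=
  forall (x y : E) (t : R), C x -> C y -> x != y -> 0 < t < 1 ->
    (f (t *: x + (1 - t) *: y)%R < t%:E * f x + (1 - t)%:E * f y)%E.

Definition essentially_smooth (f : E -> \bar R) : Prop :=
  (interior (edom f) !=set0) /\
  (forall x, interior (edom f) x -> diff_at f x) /\
  (forall (z_ : nat -> E) (z : E),
      (forall k, interior (edom f) (z_ k)) ->
      z_ @ \oo --> z ->
      (closure (edom f) `\` interior (edom f)) z ->
      (fun k => enorm (grad f (z_ k))) @ \oo --> +oo).
Definition essentially_strictly_convex (f : E -> \bar R) : Prop :=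
  forall C, C `<=` dom_subdiff f -> convex_set_E C -> strictly_convex_on f C.
Definition Legendre (f : E -> \bar R) : Prop :=
  Gamma0 f /\ essentially_smooth f /\ essentially_strictly_convex f.

Definition bregman (f : E -> \bar R) (z1 z2 : E) : \bar R :=
  if `[< edom f z1 /\ interior (edom f) z2 >] then
    (f z1 - f z2 - (dot (grad f z2) (z1 - z2)%R)%:E)%E
  else +oo%E.

Definition dom_op (T : E -> set E) : set E := [set x | T x !=set0].
Definition monotone_op (T : E -> set E) : Prop :=
  forall x y u v, T x u -> T y v -> 0 <= dot (x - y) (u - v).
Definition maximal_monotone (T : E -> set E) : Prop :=
  monotone_op T /\
  forall S : E -> set E, monotone_op S -> (forall x, T x `<=` S x) ->
    forall x, S x = T x.

Definition ergodic (sigma : nat -> R) (p : nat -> E) (K : nat) : E :=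
  (\sum_(k < K.+1) sigma k)^-1 *: \sum_(k < K.+1) sigma k *: p k.

End Bregman.

(* Main.v *)
Require Import Defs.
From HB Require Import structures.
From mathcomp Require Import all_boot all_order all_algebra.
From mathcomp Require Import all_classical all_reals all_analysis.
From mathcomp Require Import ring lra.
Set Implicit Arguments. Unset Strict Implicit. Unset Printing Implicit Defensive.
Import Order.TTheory GRing.Theory Num.Theory.
Import numFieldNormedType.Exports.
Local Open Scope classical_set_scope.
Local Open Scope ring_scope.


Section Basic.
Context (R : realType) (n : nat).
Local Notation E := 'rV[R]_n.

Lemma coord_le (v : E) i : `|v ord0 i| <= `|v|.
Proof.
have /mapP[j Hj ->] : `|v ord0 i| \in [seq `|v x.1 x.2| | x : 'I_1 * 'I_n].
  by apply/mapP; exists (ord0, i) => //=; rewrite mem_enum.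
by rewrite [leRHS]/Num.norm /= mx_normrE; apply/bigmax_geP; right => /=; exists j.
Qed.

Lemma dotC (a b : E) : dot a b = dot b a.
Proof. by apply: eq_bigr => i _; rewrite mulrC. Qed.

Lemma dotDr (a b c : E) : dot a (b + c) = dot a b + dot a c.
Proof. by rewrite /dot -big_split; apply: eq_bigr => i _; rewrite mxE mulrDr. Qed.

Lemma dotZr (a b : E) (k : R) : dot a (k *: b) = k * dot a b.
Proof. by rewrite /dot mulr_sumr; apply: eq_bigr => i _; rewrite mxE mulrCA. Qed.

Lemma dotNr (a b : E) : dot a (- b) = - dot a b.
Proof. by rewrite -scaleN1r dotZr mulN1r. Qed.

Lemma dotBr (a b c : E) : dot a (b - c) = dot a b - dot a c.
Proof. by rewrite dotDr dotNr. Qed.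

Lemma dotDl (a b c : E) : dot (b + c) a = dot b a + dot c a.
Proof. by rewrite dotC dotDr !(dotC a). Qed.

Lemma dotZl (a b : E) (k : R) : dot (k *: b) a = k * dot b a.
Proof. by rewrite dotC dotZr dotC. Qed.

Lemma dotNl (a b : E) : dot (- b) a = - dot b a.
Proof. by rewrite dotC dotNr dotC. Qed.

Lemma dotBl (a b c : E) : dot (b - c) a = dot b a - dot c a.
Proof. by rewrite dotDl dotNl. Qed.

Lemma dot0r (a : E) : dot a 0 = 0.
Proof. by rewrite /dot big1 // => i _; rewrite mxE mulr0. Qed.

Lemma dot0l (a : E) : dot 0 a = 0.
Proof. by rewrite dotC dot0r. Qed.

Lemma dot_bound (a h : E) : `|dot a h| <= (\sum_i `|a ord0 i|) * `|h|.
Proof.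
rewrite /dot mulr_suml; apply: le_trans (ler_norm_sum _ _ _) _.
apply: ler_sum => i _; rewrite normrM; apply: ler_wpM2l => //; exact: coord_le.
Qed.

Lemma dot_delta (a : E) i : dot a (delta_mx ord0 i) = a ord0 i.
Proof.
rewrite /dot (bigD1 i) //= big1 ?addr0; first by rewrite mxE !eqxx mulr1.
by move=> j /negbTE ji; rewrite mxE ji andbF mulr0.
Qed.

Lemma row_sum_delta (h : E) : h = \sum_i h ord0 i *: (delta_mx ord0 i : E).
Proof.
apply/rowP => j; rewrite summxE (bigD1 j) //= big1 ?addr0.
  by rewrite !mxE !eqxx mulr1.
by move=> i ij; rewrite !mxE [j == i]eq_sym (negbTE ij) andbF mulr0.
Qed.

End Basic.


Section Comp.
Context (R : realType) (n : nat).
Local Notation E := 'rV[R]_n.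

Lemma lsc_compact_min (f : E -> \bar R) (A : set E) (l : R) :
  lsc_fun f -> compact A ->
  (forall e, 0 < e -> exists x, A x /\ (f x < (l + e)%:E)%E) ->
  exists x, A x /\ (f x <= l%:E)%E.
Proof.
move=> hl hA hex.
pose F := filter_from [set e : R | 0 < e]
  (fun e => A `&` [set x | (f x < (l + e)%:E)%E]).
have FF : ProperFilter F.
  apply: filter_from_proper.
    apply: filter_from_filter; first by exists 1%R => /=; exact: ltr01.
    move=> i j /= i0 j0; exists (Order.min i j); first by rewrite lt_min i0.
    move=> x [Ax fx]; split; split => //; apply: (lt_le_trans fx);
      by rewrite lee_fin lerD2l ge_min lexx ?orbT.
  by move=> e /= e0; have [x [Ax fx]] := hex e e0; exists x.
have FA : F A by exists 1%R => /= [|x []//]; exact: ltr01.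
have [x [Ax clx]] := hA F FF FA.
exists x; split => //; rewrite leNgt; apply/negP => lfx.
have [a [la afx]] : exists a : R, l < a /\ (a%:E < f x)%E.
  move: lfx; case: (f x) => [r|_|//].
    by rewrite lte_fin => lr; exists ((l + r) / 2); rewrite lte_fin; split; lra.
  by exists (l + 1); split; [lra | exact: ltry].
have /= nb := hl x a afx.
have FB : F (A `&` [set x | (f x < (l + (a - l))%:E)%E]).
  by exists (a - l) => //=; rewrite subr_gt0.
have [z [[Az fz] az]] := clx _ _ FB nb.
by move: fz; rewrite addrC subrK => /lt_trans /(_ az); rewrite ltxx.
Qed.

Lemma sphere_compact (u : E) (r : R) :
  compact [set x : E | `|x - u| = r].
Proof.
apply: bounded_closed_compact.
  rewrite /= /bounded_near; near=> M => x /= xr.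
  apply: le_trans (_ : `|x - u| + `|u| <= M).
    by rewrite -[x in leLHS](subrK u); apply: ler_normD.
  rewrite xr; near: M; apply: nbhs_pinfty_ge; exact: num_real.
have -> : [set x : E | `|x - u| = r] = (fun x => `|x - u|) @^-1` [set r] by [].
apply: preimage_closed; last exact: closed_eq.
move=> x _; apply: continuous_comp; last exact: norm_continuous.
apply: continuousB; [exact: cvg_id | exact: cst_continuous].
Unshelve. all: by end_near. Qed.

End Comp.


Section Diff.
Context (R : realType) (n : nat).
Local Notation E := 'rV[R]_n.

Definition dotl (u : E) : E -> R := fun h => dot u h.

Lemma dotl_lin (u : E) : linear_for *:%R (dotl u).
Proof. by move=> a x y; rewrite /dotl dotDr dotZr. Qed.

HB.instance Definition _ (u : E) :=
  GRing.isLinear.Build R E R *:%R (dotl u) (dotl_lin u).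

Lemma dotl_cont (u : E) : continuous (dotl u).
Proof.
move=> x; apply/(@cvgrPdist_le _ _ _ (nbhs x)) => e e0.
pose S := \sum_i `|u ord0 i| + 1.
have S0 : 0 < S by rewrite /S ltr_pwDr // sumr_ge0.
apply/nbhs_ballP; exists (S^-1 * e); first by rewrite /= mulr_gt0 // invr_gt0.
move=> y; rewrite -ball_normE /ball_ /= => /ltW xy.
rewrite /dotl -dotBr; apply: le_trans (dot_bound _ _) _.
apply: le_trans (_ : S * `|x - y| <= e).
  by apply: ler_wpM2r => //; rewrite /S lerDl.
by rewrite -ler_pdivlMl.
Qed.

Lemma diff_unique_bound (f : E -> R) (x u : E) :
  (forall eps, 0 < eps -> \forall h \near (0 : E),
      `|f (h + x) - f x - dot u h| <= eps * `|h|) ->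
  'd f x = dotl u :> (E -> R).
Proof.
move=> hb; apply: diff_unique; first exact: dotl_cont.
apply/eqaddoP => eps eps0; have := hb eps eps0.
apply: filterS => h; rewrite /= opprD addrA.
by [].
Qed.

Lemma grad_dot (f : E -> \bar R) (z h : E) :
  dot (grad f z) h = 'd (fun y => fine (f y)) z h.
Proof.
rewrite [in RHS](row_sum_delta h) linear_sum /= /dot.
apply: eq_bigr => i _; rewrite linearZ /= mxE mulrC.
by [].
Qed.

Lemma d_le (g : E -> R) (u h : E) (c d : R) : 0 < d ->
  differentiable g u ->
  (forall t, 0 < t < d -> g (u + t *: h) - g u <= t * c) ->
  'd g u h <= c.
Proof.
move=> d0 dg hb; rewrite -deriveE //.
have cv : derivable g u h by exact: diff_derivable.
have H : (fun t : R => t^-1 *: (g (t *: h + u) - g u)) @ 0^'+ --> 'D_h g u.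
  apply: cvg_trans; last exact: cv.
  apply: cvg_app; apply: within_subset => t /= t0; exact: lt0r_neq0.
apply: (cvgr_to_le H); near=> t.
have t0 : 0 < t by near: t; exact: nbhs_right_gt.
have td : t < d by near: t; exact: nbhs_right_lt.
rewrite [t *: h + u]addrC -ler_pdivlMl ?invr_gt0 // invrK; apply: hb; rewrite t0.
Unshelve. all: by end_near. Qed.

Lemma d_ge (g : E -> R) (u h : E) (c d : R) : 0 < d ->
  differentiable g u ->
  (forall t, 0 < t < d -> t * c <= g (u + t *: h) - g u) ->
  c <= 'd g u h.
Proof.
move=> d0 dg hb; rewrite -deriveE //.
have cv : derivable g u h by exact: diff_derivable.
have H : (fun t : R => t^-1 *: (g (t *: h + u) - g u)) @ 0^'+ --> 'D_h g u.
  apply: cvg_trans; last exact: cv.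
  apply: cvg_app; apply: within_subset => t /= t0; exact: lt0r_neq0.
apply: (cvgr_to_ge H); near=> t.
have t0 : 0 < t by near: t; exact: nbhs_right_gt.
have td : t < d by near: t; exact: nbhs_right_lt.
rewrite [t *: h + u]addrC -ler_pdivrMl ?invr_gt0 // invrK; apply: hb; rewrite t0.
Unshelve. all: by end_near. Qed.

End Diff.


Section Cvx.
Context (R : realType) (n : nat) (Phi : 'rV[R]_n -> \bar R).
Local Notation E := 'rV[R]_n.
Hypothesis Hp : forall x, (-oo < Phi x)%E.
Local Notation phi := (fun x => fine (Phi x)).

Lemma edomE x : edom Phi x -> Phi x = (phi x)%:E.
Proof.
by move=> hx; rewrite fineK // fin_numE (gt_eqF (Hp x)) (lt_eqF hx).
Qed.

Lemma nedomE x : ~ edom Phi x -> Phi x = +oo%E.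
Proof.
move=> hx; move: (Hp x); rewrite /edom /= in hx.
by case: (Phi x) hx => // r; rewrite ltry.
Qed.

Lemma cvx_real x y t : convex_fun Phi -> edom Phi x -> edom Phi y -> 0 < t < 1 ->
  edom Phi (t *: x + (1 - t) *: y) /\
  phi (t *: x + (1 - t) *: y) <= t * phi x + (1 - t) * phi y.
Proof.
move=> hc hx hy ht; have := hc x y t ht.
rewrite (edomE hx) (edomE hy) -!EFinM -EFinD => hle.
have hz : edom Phi (t *: x + (1 - t) *: y) by apply: le_lt_trans hle _; exact: ltry.
by split => //; move: hle; rewrite (edomE hz) lee_fin.
Qed.

Lemma scvx_real (C : set E) x y t : strictly_convex_on Phi C ->
  C x -> C y -> x != y -> edom Phi x -> edom Phi y -> 0 < t < 1 ->
  edom Phi (t *: x + (1 - t) *: y) /\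
  phi (t *: x + (1 - t) *: y) < t * phi x + (1 - t) * phi y.
Proof.
move=> hc cx cy xy hx hy ht; have := hc x y t cx cy xy ht.
rewrite (edomE hx) (edomE hy) -!EFinM -EFinD => hle.
have hz : edom Phi (t *: x + (1 - t) *: y) by apply: lt_trans hle _; exact: ltry.
by split => //; move: hle; rewrite (edomE hz) lte_fin.
Qed.

Local Notation Phis := (conj_fun Phi).

Lemma conj_ub x y : edom Phi x -> ((dot x y - phi x)%:E <= Phis y)%E.
Proof.
move=> hx; apply: ereal_sup_ubound; exists x => //.
by rewrite (edomE hx) EFinB.
Qed.

Lemma conj_le y (b : \bar R) :
  (forall x, edom Phi x -> ((dot x y - phi x)%:E <= b)%E) -> (Phis y <= b)%E.
Proof.
move=> hb; apply: ge_ereal_sup => _ [x _ <-].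
have [hx|hx] := pselect (edom Phi x).
  by rewrite (edomE hx) -EFinB; exact: hb.
by rewrite (nedomE hx) addeNy leNye.
Qed.

Hypothesis Hx0 : exists x0, edom Phi x0.

Lemma conj_fin y : edom Phis y -> Phis y = (fine (Phis y))%:E.
Proof.
move=> hy; have [x0 hx0] := Hx0.
have h1 := conj_ub y hx0.
rewrite fineK // fin_numE; apply/andP; split.
  by apply/negP => /eqP h; rewrite h leeNy_eq in h1.
by rewrite -ltey.
Qed.

Lemma conj_ub_fin x y : edom Phis y -> edom Phi x ->
  dot x y - phi x <= fine (Phis y).
Proof. by move=> hy hx; rewrite -lee_fin -conj_fin //; exact: conj_ub. Qed.

Lemma conj_approx y e : edom Phis y -> 0 < e ->
  exists x, edom Phi x /\ fine (Phis y) - e < dot x y - phi x.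
Proof.
move=> hy e0.
have : ((fine (Phis y) - e)%:E < Phis y)%E.
  by rewrite [X in (_ < X)%E]conj_fin // lte_fin; lra.
move=> /ereal_sup_gt [_ [x _ <-]] hlt.
have hx : edom Phi x.
  rewrite /edom /= ltey; apply/negP => /eqP h; by rewrite h /= addeNy ltNge leNye in hlt.
by exists x; split => //; move: hlt; rewrite (edomE hx) -EFinB lte_fin.
Qed.

End Cvx.


Section Coer.
Context (R : realType) (n : nat).
Local Notation E := 'rV[R]_n.

Lemma norm_le (v : E) (M : R) : 0 <= M -> (forall i, `|v ord0 i| <= M) -> `|v| <= M.
Proof.
move=> M0 hv; rewrite [leLHS]/Num.norm /= mx_normrE; apply/bigmax_leP; split => //.
by case=> i j _ /=; rewrite (ord1 i); exact: hv.
Qed.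

Lemma norm_delta i : `|delta_mx ord0 i : E| <= 1.
Proof.
apply: norm_le => // j; rewrite mxE; case: (_ && _) => /=; by rewrite ?normr1 ?normr0.
Qed.

Context (Phi : E -> \bar R).
Hypothesis Hp : forall x, (-oo < Phi x)%E.
Hypothesis Hx0 : exists x0, edom Phi x0.
Local Notation phi := (fun x => fine (Phi x)).
Local Notation Phis := (conj_fun Phi).

Lemma coercive y : interior (edom Phis) y ->
  exists c C, 0 < c /\ forall x, edom Phi x -> c * `|x| <= phi x - dot x y + C.
Proof.
move=> /nbhs_ballP [eps /= eps0 hb].
have hy : edom Phis y by apply: hb; exact: ballxx.
pose c := eps / 2.
have c0 : 0 < c by rewrite /c divr_gt0.
pose pt (p : 'I_n * bool) : E := y + (if p.2 then c else - c) *: delta_mx ord0 p.1.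
have hpt p : edom Phis (pt p).
  apply: hb; rewrite -ball_normE /ball_ /= /pt opprD addrA subrr add0r normrN normrZ.
  apply: le_lt_trans (_ : `|(if p.2 then c else - c)| * 1 < eps).
    by apply: ler_wpM2l => //; exact: norm_delta.
  rewrite mulr1; case: p.2; rewrite ?normrN gtr0_norm // /c; lra.
pose C := \sum_p `|fine (Phis (pt p))| + `|fine (Phis y)|.
exists c, C; split => // x hx.
have hs := conj_ub_fin Hp Hx0 hy hx.
have hq p : dot x (pt p) - phi x <= C.
  apply: le_trans (conj_ub_fin Hp Hx0 (hpt p) hx) _.
  apply: le_trans (ler_norm _) _; rewrite /C (bigD1 p) //= -addrA lerDl.
  by apply: addr_ge0 => //; apply: sumr_ge0.
have G0 : 0 <= phi x - dot x y + C.
  apply: le_trans (_ : - fine (Phis y) + `|fine (Phis y)| <= _).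
    by rewrite addrC subr_ge0 ler_norm.
  have : 0 <= \sum_p `|fine (Phis (pt p))| by apply: sumr_ge0.
  rewrite /C; lra.
rewrite -ler_pdivlMl // mulrC; apply: norm_le.
  by apply: divr_ge0 => //; exact: ltW.
move=> i; rewrite ler_pdivlMr // mulrC.
have h1 := hq (i, true); have h2 := hq (i, false).
rewrite /pt /= dotDr dotZr dot_delta in h1.
rewrite /pt /= dotDr dotZr dot_delta in h2.
rewrite [leLHS]mulrC; case: (ler0P (x ord0 i)) => hxi.
  lra.
lra.
Qed.

Lemma cball_compact (M : R) : compact [set x : E | `|x| <= M].
Proof.
apply: bounded_closed_compact.
  rewrite /= /bounded_near; near=> N => x /= xr.
  apply: le_trans xr _; near: N; apply: nbhs_pinfty_ge; exact: num_real.
have -> : [set x : E | `|x| <= M] = (fun x => `|x|) @^-1` [set r | r <= M] by [].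
apply: preimage_closed; last exact: closed_le.
move=> x _; exact: norm_continuous.
Unshelve. all: by end_near. Qed.

End Coer.


Section Argmin.
Context (R : realType) (n : nat).
Local Notation E := 'rV[R]_n.
Context (Phi : E -> \bar R).
Hypothesis Hp : forall x, (-oo < Phi x)%E.
Hypothesis Hx0 : exists x0, edom Phi x0.
Local Notation phi := (fun x => fine (Phi x)).
Local Notation Phis := (conj_fun Phi).

Lemma lsc_sub_dot y : lsc_fun Phi -> lsc_fun (fun x => Phi x - (dot x y)%:E)%E.
Proof.
move=> hl x a h.
have [d [d0 hd]] : exists d, 0 < d /\ ((a + dot x y + d)%:E < Phi x)%E.
  move: h; case: (Phi x) => [r| |] /=.
    rewrite -EFinB lte_fin => ar; exists ((r - dot x y - a) / 2).
    by rewrite lte_fin; split; lra.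
  by move=> _; exists 1; split => //; exact: ltry.
  by move=> /=; rewrite ltNge leNye.
have n1 := hl x _ hd.
have n2 : \forall z \near x, `|dotl y x - dotl y z| < d.
  pose S := \sum_i `|y ord0 i| + 1.
  have S0 : 0 < S by rewrite /S ltr_pwDr // sumr_ge0.
  apply/nbhs_ballP; exists (S^-1 * (d / 2)); first by rewrite /= mulr_gt0 // ?invr_gt0 // divr_gt0.
  move=> z; rewrite -ball_normE /ball_ /= => /ltW xz.
  rewrite /dotl -dotBr; apply: le_lt_trans (dot_bound _ _) _.
  apply: le_lt_trans (_ : S * `|x - z| < d).
    by apply: ler_wpM2r => //; rewrite /S lerDl.
  have := ler_wpM2l (ltW S0) xz; rewrite mulrA mulfV ?gt_eqF // mul1r => hh; lra.
apply: filterS2 n1 n2 => z h1 h2.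
move: h1; case: (Phi z) => [r| |] //=.
  rewrite -EFinB !lte_fin /dotl in h2 *; rewrite !(dotC y) in h2.
  move: h2 => /ltr_normlP [h2 h3]; lra.
by move=> _; rewrite addye // ltry.
Qed.

Lemma conj_argmin y : interior (edom Phis) y -> lsc_fun Phi ->
  exists u, edom Phi u /\ phi u - dot u y = - fine (Phis y).
Proof.
move=> hiy hl.
have hy : edom Phis y by exact: nbhs_singleton hiy.
have [c [C [c0 hco]]] := coercive Hp Hx0 hiy.
pose s := fine (Phis y).
pose M := (C - s + 1) / c.
have hex : forall e, 0 < e -> exists x, `|x| <= M /\ (Phi x - (dot x y)%:E < (- s + e)%:E)%E.
  move=> e e0.
  have e10 : 0 < Order.min e 1 by rewrite lt_min e0 ltr01.
  have [x [hx hlt]] := conj_approx Hp Hx0 hy e10.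
  exists x; split.
    have := hco x hx; rewrite -/s => h.
    rewrite /M ler_pdivlMr // mulrC.
    have : Order.min e 1 <= 1 by rewrite ge_min lexx orbT.
    rewrite -/s in hlt; lra.
  rewrite (edomE Hp hx) -EFinB lte_fin.
  have : Order.min e 1 <= e by rewrite ge_min lexx.
  rewrite -/s in hlt; lra.
have [u [_ hu]] := lsc_compact_min (lsc_sub_dot (y:=y) hl) (cball_compact (n:=n) (M:=M)) hex.
  have hdu : edom Phi u.
    rewrite /edom /= ltey; apply/negP => /eqP h; by rewrite h /= in hu.
  exists u; split => //.
  move: hu; rewrite (edomE Hp hdu) -EFinB lee_fin => hu.
  have := conj_ub_fin Hp Hx0 hy hdu; rewrite -/s; lra.
Qed.

Lemma argmin_unique y u u' : edom Phis y -> convex_fun Phi ->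
  essentially_strictly_convex Phi ->
  edom Phi u -> edom Phi u' ->
  phi u - dot u y = - fine (Phis y) -> phi u' - dot u' y = - fine (Phis y) -> u = u'.
Proof.
move=> hy hc hsc hu hu' eu eu'.
pose s := fine (Phis y).
pose Ms := [set w | edom Phi w /\ phi w - dot w y <= - s].
have hMs : Ms `<=` dom_subdiff Phi.
  move=> w [hw ew]; exists y; split => // x.
  have [hx|hx] := pselect (edom Phi x); last by rewrite (nedomE Hp hx) leey.
  rewrite (edomE Hp hx) (edomE Hp hw) -EFinD lee_fin dotBr !(dotC y).
  have := conj_ub_fin Hp Hx0 hy hx; rewrite -/s in ew *; lra.
have cMs : convex_set_E Ms.
  move=> a b t [ha ea] [hb eb] /andP [t0 t1].
  have [->|tn0] := eqVneq t 0.
    by rewrite scale0r add0r subr0 scale1r.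
  have [->|tn1] := eqVneq t 1.
    by rewrite scale1r subrr scale0r addr0.
  have t01 : 0 < t < 1 by rewrite !lt_def tn0 t0 eq_sym tn1 t1.
  have [hz ez] := cvx_real Hp hc ha hb t01.
  split => //; rewrite dotDl !dotZl.
  have h1 : t * (phi a - dot a y) <= t * (- s) by apply: ler_wpM2l.
  have h2 : (1 - t) * (phi b - dot b y) <= (1 - t) * (- s).
    by apply: ler_wpM2l => //; rewrite subr_ge0.
  rewrite -/s in ea eb; lra.
apply/eqP; apply/negPn/negP => uu'.
have hu2 : Ms u by split => //; rewrite eu.
have hu2' : Ms u' by split => //; rewrite eu'.
have t01 : 0 < (2^-1 : R) < 1 by rewrite invr_gt0 ltr0n /= invf_lt1 // ltr1n.
have [hz ez] := scvx_real Hp (hsc Ms hMs cMs) hu2 hu2' uu' hu hu' t01.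
have := conj_ub_fin Hp Hx0 hy hz; rewrite dotDl !dotZl -/s => h.
rewrite -/s in eu eu'.
have : 2^-1 * (phi u - dot u y) + (1 - 2^-1) * (phi u' - dot u' y) = - s :> R.
  by rewrite eu eu'; ring.
lra.
Qed.

End Argmin.


Section Dansk.
Context (R : realType) (n : nat).
Local Notation E := 'rV[R]_n.

Lemma dot_bound2 (a h : E) : `|dot a h| <= (n%:R + 1) * `|a| * `|h|.
Proof.
apply: le_trans (dot_bound _ _) _; apply: ler_wpM2r => //.
apply: le_trans (_ : \sum_(i < n) `|a| <= _).
  by apply: ler_sum => i _; exact: coord_le.
by rewrite sumr_const card_ord mulrDl mul1r mulr_natl lerDl.
Qed.


Context (Phi : E -> \bar R).
Hypothesis Hp : forall x, (-oo < Phi x)%E.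
Hypothesis Hx0 : exists x0, edom Phi x0.
Hypothesis Hl : lsc_fun Phi.
Hypothesis Hc : convex_fun Phi.
Hypothesis Hsc : essentially_strictly_convex Phi.
Local Notation phi := (fun x => fine (Phi x)).
Local Notation Phis := (conj_fun Phi).

Lemma sphere_pos y u r : edom Phis y -> edom Phi u ->
  phi u - dot u y = - fine (Phis y) -> 0 < r ->
  exists mu, 0 < mu /\ forall x, `|x - u| = r -> edom Phi x ->
    mu <= phi x - dot x y + fine (Phis y).
Proof.
move=> hy hu eu r0.
pose s := fine (Phis y).
case: (pselect (exists mu, 0 < mu /\ forall x, `|x - u| = r -> edom Phi x ->
    mu <= phi x - dot x y + s)) => // nP; exfalso.
have hex : forall e, 0 < e -> exists x, `|x - u| = r /\ (Phi x - (dot x y)%:E < (- s + e)%:E)%E.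
  move=> e e0.
  case: (pselect (exists x, `|x - u| = r /\ (Phi x - (dot x y)%:E < (- s + e)%:E)%E)) => // hne; exfalso.
  apply: nP; exists e; split => // x hx hdx; rewrite leNgt; apply/negP => hlt.
  apply: hne; exists x; split => //; rewrite (edomE Hp hdx) -EFinB lte_fin; lra.
have [x [hx hgx]] := lsc_compact_min (lsc_sub_dot (y:=y) Hl)
  (sphere_compact (n:=n) (u:=u) (r:=r)) hex.
have hdx : edom Phi x.
  rewrite /edom /= ltey; apply/negP => /eqP h; by rewrite h /= in hgx.
move: hgx; rewrite (edomE Hp hdx) -EFinB lee_fin => hgx.
have := conj_ub_fin Hp Hx0 hy hdx; rewrite -/s => h.
have ex : phi x - dot x y = - fine (Phis y) by rewrite -/s; lra.
have := argmin_unique Hp Hx0 hy Hc Hsc hu hdx eu ex.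
move=> xu; move: hx; rewrite -xu /= subrr normr0 => hx; lra.
Qed.

Lemma danskin y u eta : interior (edom Phis) y -> edom Phi u ->
  phi u - dot u y = - fine (Phis y) -> 0 < eta ->
  exists d, 0 < d /\ forall h, `|h| < d ->
    `|fine (Phis (h + y)) - fine (Phis y) - dot u h| <= eta * `|h|.
Proof.
move=> hiy hu eu eta0.
have hy : edom Phis y by exact: nbhs_singleton hiy.
move: (hiy) => /nbhs_ballP [eps /= eps0 hb].
pose s := fine (Phis y).
pose N : R := n%:R + 1.
have N0 : 0 < N by rewrite /N ltr_pwDr.
pose r := eta / N.
have r0 : 0 < r by rewrite /r divr_gt0.
have [mu [mu0 hmu]] := sphere_pos hy hu eu r0.
pose d := Order.min eps (mu / (r * N)).
have d0 : 0 < d by rewrite /d lt_min eps0 /= divr_gt0 // mulr_gt0.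
exists d; split => // h hh.
have hde : `|h| < eps by apply: lt_le_trans hh _; rewrite /d ge_min lexx.
have hdm : `|h| <= mu / (r * N) by apply: ltW; apply: lt_le_trans hh _; rewrite /d ge_min lexx orbT.
have hyh : edom Phis (h + y).
  apply: hb; rewrite -ball_normE /ball_ /= opprD addrCA subrr addr0 normrN //.
have lower := conj_ub_fin Hp Hx0 hyh hu.
rewrite dotDr -/s in lower.
have upper : fine (Phis (h + y)) <= s + dot u h + eta * `|h|.
  rewrite -lee_fin -conj_fin //; apply: conj_le => // x hx.
  rewrite lee_fin dotDr.
  pose psi := phi x - dot x y + s.
  have psi0 : 0 <= psi by have := conj_ub_fin Hp Hx0 hy hx; rewrite /psi -/s; lra.
  suff : dot (x - u) h - psi <= eta * `|h|.
    by rewrite dotBl /psi; lra.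
  have hb2 := dot_bound2 (x - u) h; rewrite -/N in hb2.
  have [xr|xr] := leP `|x - u| r.
    have : N * `|x - u| * `|h| <= eta * `|h|.
      apply: ler_wpM2r => //; rewrite /r in xr.
      by move: xr; rewrite ler_pdivlMr // mulrC.
    have := ler_norm (dot (x - u) h); lra.
  have xu0 : 0 < `|x - u| by apply: lt_trans xr.
  pose lam := r / `|x - u|.
  have lam0 : 0 < lam by rewrite /lam divr_gt0.
  have lam1 : lam < 1 by rewrite /lam ltr_pdivrMr // mul1r.
  have lam01 : 0 < lam < 1 by rewrite lam0 lam1.
  have [hz ez] := cvx_real Hp Hc hx hu lam01.
  set z := lam *: x + (1 - lam) *: u in hz ez.
  have zu : `|z - u| = r.
    have -> : z - u = lam *: (x - u).
      by rewrite /z scalerBl scale1r scalerBr [u - _]addrC addrA addrK.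
    by rewrite normrZ gtr0_norm // /lam divfK // gt_eqF.
  have dz : dot z y = lam * dot x y + (1 - lam) * dot u y.
    by rewrite /z dotDl (dotZl y x lam) (dotZl y u (1 - lam)).
  have := hmu z zu hz; rewrite dz => hmz.
  have hpsi : mu <= lam * psi.
    rewrite /psi; move: hmz eu; rewrite -/s => hmz eu'.
    have : lam * phi x + (1 - lam) * phi u - (lam * dot x y + (1 - lam) * dot u y) + s
      = lam * (phi x - dot x y + s) + (1 - lam) * (phi u - dot u y + s) by ring.
    rewrite eu' addNr mulr0 addr0 => <-; lra.
  have hpsi2 : mu * `|x - u| <= r * psi.
    move: hpsi; rewrite /lam mulrAC ler_pdivlMr //.
  have : N * `|x - u| * `|h| <= mu * `|x - u| / r.
    rewrite mulrAC [X in _ <= X]mulrAC; apply: ler_wpM2r => //.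
    move: hdm; rewrite ler_pdivlMr ?mulr_gt0 ?invr_gt0 // => hdm.
    rewrite ler_pdivlMr //; lra.
  have : mu * `|x - u| / r <= psi by rewrite ler_pdivrMr // [psi * r]mulrC.
  have := ler_norm (dot (x - u) h).
  have : 0 <= eta * `|h| by rewrite mulr_ge0 // ltW.
  lra.
rewrite -/s in eu *; rewrite ger0_norm; lra.
Qed.

End Dansk.


Section Grad.
Context (R : realType) (n : nat).
Local Notation E := 'rV[R]_n.
Context (Phi : E -> \bar R).
Hypothesis Hp : forall x, (-oo < Phi x)%E.
Hypothesis Hx0 : exists x0, edom Phi x0.
Hypothesis Hl : lsc_fun Phi.
Hypothesis Hc : convex_fun Phi.
Hypothesis Hsc : essentially_strictly_convex Phi.
Local Notation phi := (fun x => fine (Phi x)).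
Local Notation Phis := (conj_fun Phi).

Lemma conj_grad y : interior (edom Phis) y ->
  edom Phi (grad Phis y) /\ subdiff Phi (grad Phis y) y.
Proof.
move=> hiy.
have hy : edom Phis y by exact: nbhs_singleton hiy.
have [u [hu eu]] := conj_argmin Hp Hx0 hiy Hl.
have hd : 'd (fun y' => fine (Phis y')) y = dotl u :> (E -> R).
  apply: diff_unique_bound => eps eps0.
  have [d [d0 hd]] := danskin Hp Hx0 Hl Hc Hsc hiy hu eu eps0.
  apply/nbhs_ballP; exists d => //= h.
  rewrite -ball_normE /ball_ /= sub0r normrN => hh; exact: hd.
have -> : grad Phis y = u.
  apply/rowP => i; rewrite mxE (congr1 (fun F => F (delta_mx ord0 i)) hd).
  by rewrite /dotl dot_delta.
split => //; split => // x.
have [hx|hx] := pselect (edom Phi x); last by rewrite (nedomE Hp hx) leey.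
rewrite (edomE Hp hx) (edomE Hp hu) -EFinD lee_fin dotBr !(dotC y).
have := conj_ub_fin Hp Hx0 hy hx; lra.
Qed.

Lemma grad_sub u y : interior (edom Phi) u -> diff_at Phi u -> subdiff Phi u y ->
  grad Phi u = y.
Proof.
move=> hiu hdu [hu hsub].
move: (hiu) => /nbhs_ballP [eps /= eps0 hb].
have key h : dot y h <= 'd (fun x => fine (Phi x)) u h.
  apply: (@d_ge _ _ _ _ _ _ (eps / (`|h| + 1))) => //.
    by rewrite divr_gt0 // ltr_pwDr.
  move=> t /andP [t0 td].
  have hth : edom Phi (u + t *: h).
    apply: hb; rewrite -ball_normE /ball_ /= opprD addrA subrr sub0r normrN normrZ.
    rewrite gtr0_norm //; move: td; rewrite ltr_pdivlMr ?ltr_pwDr // => td.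
    apply: le_lt_trans td; rewrite mulrDr mulr1 lerDl; exact: ltW.
  have := hsub (u + t *: h).
  rewrite (edomE Hp hth) (edomE Hp hu) -EFinD lee_fin addrAC subrr add0r dotZr.
  lra.
apply/rowP => i; rewrite mxE; apply/eqP; rewrite eq_le; apply/andP; split.
  have := key (- delta_mx ord0 i); rewrite linearN /= dotNr dot_delta; lra.
by have := key (delta_mx ord0 i); rewrite dot_delta.
Qed.

Lemma breg_ge0 z x : interior (edom Phi) z -> diff_at Phi z -> edom Phi x ->
  0 <= phi x - phi z - dot (grad Phi z) (x - z).
Proof.
move=> hiz hdz hx.
have hz : edom Phi z by exact: nbhs_singleton hiz.
rewrite grad_dot subr_ge0.
apply: (@d_le _ _ _ _ _ _ 1) => // t /andP [t0 t1].
have -> : z + t *: (x - z) = t *: x + (1 - t) *: z.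
  by apply/rowP => j; rewrite !mxE; ring.
have ht : 0 < t < 1 by rewrite t0.
have [_ h] := cvx_real Hp Hc hx hz ht.
lra.
Qed.

End Grad.

Unset Implicit Arguments.
Set Strict Implicit.


Theorem mainTheorem10 (R : realType) (n : nat)
  (Phi : 'rV[R]_n -> \bar R) (T : 'rV[R]_n -> set 'rV[R]_n)
  (z p w : nat -> 'rV[R]_n) (sigma rho : nat -> R) (sigma_min : R) :
  Legendre Phi ->
  maximal_monotone T ->
  interior (edom Phi) `&` dom_op T !=set0 ->
  interior (edom Phi) (z 0%N) ->
  0 < sigma_min ->
  (forall k, sigma_min <= sigma k) ->
  (forall k, 0 <= rho k < 1) ->
  (forall k, edom Phi (p k)) ->
  (forall k, T (p k) (w k)) ->
  (forall k, interior (edom (conj_fun Phi)) (grad Phi (z k) - sigma k *: w k)) ->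
  (forall k, z k.+1 = grad (conj_fun Phi) (grad Phi (z k) - sigma k *: w k)) ->
  (forall k, interior (edom Phi) (z k.+1)) ->
  (forall k, (bregman Phi (p k) (z k.+1) <= (rho k)%:E * bregman Phi (p k) (z k))%E) ->
  forall x : 'rV[R]_n, dom_op T x -> edom Phi x ->
  forall v : 'rV[R]_n, T x v ->
  forall K : nat,
    ((dot v (ergodic sigma p K - x))%:E
       <= bregman Phi x (z 0%N) * ((\sum_(k < K.+1) sigma k)^-1)%:E)%E.
Proof.
move=> [[[[x0 hx0] Hp] [Hl Hc]] [[_ [Hdiff _]] Hsc]] [Hmon _] _ hz0 hsmin hsig hrho
  hp hT hyint hz hzint hbreg x _ hx v hv K.
have Hx0 : exists x0, edom Phi x0 by exists x0.
have hzi k : interior (edom Phi) (z k) by case: k.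
have hsig0 k : 0 <= sigma k by apply: le_trans (hsig k); exact: ltW.
have hgrad k : grad Phi (z k.+1) = grad Phi (z k) - sigma k *: w k.
  have [_ hs] := conj_grad Hp Hx0 Hl Hc Hsc (hyint k).
  rewrite hz; apply: grad_sub => //.
  - by rewrite -hz.
  - by apply: Hdiff; rewrite -hz.
pose D a b := fine (Phi a) - fine (Phi b) - dot (grad Phi b) (a - b).
have hbregE a b : edom Phi a -> interior (edom Phi) b -> bregman Phi a b = (D a b)%:E.
  move=> ha hb; rewrite /bregman asboolT //.
  by rewrite (edomE Hp ha) (edomE Hp (nbhs_singleton hb)) -!EFinB.
have Dge0 a k : edom Phi a -> 0 <= D a (z k).
  by move=> ha; apply: breg_ge0 => //; apply: Hdiff.
have step k : sigma k * dot v (p k - x) <= D x (z k) - D x (z k.+1).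
  have h1 := hbreg k; rewrite !hbregE // -EFinM lee_fin in h1.
  have id3 : D x (z k.+1) - D x (z k) - (D (p k) (z k.+1) - D (p k) (z k))
      = sigma k * dot (w k) (x - p k).
    rewrite /D hgrad !dotBl !dotBr !dotZl; ring.
  have hm := Hmon _ _ _ _ (hT k) hv.
  have hm' : dot (w k) (x - p k) <= dot v (x - p k).
    rewrite dotC [dot v _]dotC -opprB !dotNl lerN2.
    rewrite dotC dotBl in hm; rewrite -subr_ge0; move: hm.
    by rewrite [dot v _]dotC [dot (w k) _]dotC.
  have m1 : sigma k * dot (w k) (x - p k) <= sigma k * dot v (x - p k).
    by apply: ler_wpM2l.
  have m2 : rho k * D (p k) (z k) <= D (p k) (z k).
    apply: ler_piMl; first exact: Dge0.
    by case/andP: (hrho k) => _ /ltW.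
  have m3 : dot v (x - p k) = - dot v (p k - x) by rewrite -opprB dotNr.
  rewrite m3 mulrN in m1.
  lra.
have hsum k : \sum_(i < k.+1) sigma i * dot v (p i - x) <= D x (z 0%N) - D x (z k.+1).
  elim: k => [|k IH]; first by rewrite big_ord1; exact: step.
  rewrite big_ord_recr /=; have := step k.+1; lra.
pose S := \sum_(k < K.+1) sigma k.
have S0 : 0 < S.
  have h0 := lt_le_trans hsmin (hsig 0%N).
  have h1 : 0 <= \sum_(i < K) sigma (lift ord0 i) by apply: sumr_ge0 => i _.
  rewrite /S big_ord_recl /=; lra.
have hdotsum0 : dotl v (\sum_(k < K.+1) sigma k *: p k) =
    \sum_(k < K.+1) sigma k * dot v (p k).
  by rewrite raddf_sum; apply: eq_bigr => i _; exact: dotZr.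
have hdotsum : dot v (\sum_(k < K.+1) sigma k *: p k) =
    \sum_(k < K.+1) sigma k * dot v (p k) by exact: hdotsum0.
have E1 : dot v (ergodic sigma p K - x) =
    S^-1 * \sum_(k < K.+1) sigma k * dot v (p k - x).
  have -> : \sum_(k < K.+1) sigma k * dot v (p k - x) =
      \sum_(k < K.+1) sigma k * dot v (p k) - S * dot v x.
    rewrite /S mulr_suml -sumrB; apply: eq_bigr => i _; rewrite dotBr; ring.
  rewrite /ergodic dotBr dotZr hdotsum -/S mulrBr mulrA mulVf ?mul1r //.
  exact: lt0r_neq0.
rewrite hbregE // -EFinM lee_fin E1 mulrC; apply: ler_wpM2r.
  by rewrite invr_ge0 ltW.
have := hsum K; have := Dge0 x K.+1 hx; lra.
Qed.
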